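(* Let $\mathbf{A}\in\mathbb{R}^{m\times n}$ have rows $\mathbf{a}_1^\mathsf{T},\dots,\mathbf{a}_m^\mathsf{T}$ and let $\lambda>\max_{l}\|\mathbf{a}_l\|_\infty$. Consider $$\text{(P)}\quad \min_{\boldsymbol{x}\in\{-1,1\}^n}\ \max_{l\in\{1,\dots,m\}}\mathbf{a}_l^\mathsf{T}\boldsymbol{x},\qquad \text{(P}_\lambda\text{)}\quad \min_{\boldsymbol{x}\in[-1,1]^n}\ \max_{l\in\{1,\dots,m\}}\mathbf{a}_l^\mathsf{T}\boldsymbol{x}-\lambda\|\boldsymbol{x}\|_1.$$ Then every optimal solution of (P) is an optimal solution of (P$_\lambda$), and every optimal solution of (P$_\lambda$) is an optimal solution of (P). *)

(* Defs.v *)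
From HB Require Import structures.
From mathcomp Require Import all_boot all_order all_algebra.
Set Implicit Arguments. Unset Strict Implicit. Unset Printing Implicit Defensive.
Import Order.TTheory GRing.Theory Num.Theory.
Local Open Scope ring_scope.

Section Defs.
Variables (R : realFieldType) (m n : nat).

Definition rowdot (A : 'M[R]_(m.+1, n)) (l : 'I_m.+1) (x : 'cV[R]_n) : R :=
  (A *m x) l 0.

(* max_{l} a_l^T x  (m.+1 >= 1 rows, so the max is well defined) *)
Definition maxobj (A : 'M[R]_(m.+1, n)) (x : 'cV[R]_n) : R :=
  \big[Num.max/rowdot A ord0 x]_(l < m.+1) rowdot A l x.

Definition norm1 (x : 'cV[R]_n) : R := \sum_(j < n) `|x j 0|.

Definition row_norminf (A : 'M[R]_(m.+1, n)) (l : 'I_m.+1) : R :=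
  \big[Num.max/0]_(j < n) `|A l j|.

Definition binvec (x : 'cV[R]_n) : Prop := forall j, x j 0 = 1 \/ x j 0 = -1.
Definition boxvec (x : 'cV[R]_n) : Prop := forall j, -1 <= x j 0 <= 1.

Definition optP (A : 'M[R]_(m.+1, n)) (x : 'cV[R]_n) : Prop :=
  binvec x /\ forall y, binvec y -> maxobj A x <= maxobj A y.

Definition optPlam (A : 'M[R]_(m.+1, n)) (lam : R) (x : 'cV[R]_n) : Prop :=
  boxvec x /\ forall y, boxvec y ->
    maxobj A x - lam * norm1 x <= maxobj A y - lam * norm1 y.
End Defs.

(* Main.v *)
Require Import Defs.
From mathcomp Require Import all_boot all_order all_algebra.
Import Order.TTheory GRing.Theory Num.Theory.
Local Open Scope ring_scope.
Set Implicit Arguments. Unset Strict Implicit.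

Section Aux.
Variables (R : realFieldType) (m n : nat) (A : 'M[R]_(m.+1, n)).
Implicit Types x : 'cV[R]_n.

Definition rnd (x : 'cV[R]_n) : 'cV[R]_n := \col_j (if 0 <= x j 0 then 1 else -1).
Definition Sdef (x : 'cV[R]_n) : R := \sum_(j < n) (1 - `|x j 0|).

Lemma rnd_bin x : binvec (rnd x).
Proof. by move=> j; rewrite mxE; case: ifP => _; [left|right]. Qed.

Lemma bin_box x : binvec x -> boxvec x.
Proof.
move=> h j; have h1 : (-1 : R) <= 1 by rewrite -subr_ge0 opprK; exact: addr_ge0.
by case: (h j) => ->; rewrite lexx ?h1.
Qed.

Lemma norm1_bin x : binvec x -> norm1 x = n%:R.
Proof.
move=> h; rewrite /norm1 (eq_bigr (fun _ => 1)).
  by rewrite sumr_const card_ord.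
by move=> j _; case: (h j) => ->; rewrite ?normrN normr1.
Qed.

Lemma term_ge0 x j : boxvec x -> 0 <= 1 - `|x j 0|.
Proof. move=> h; rewrite subr_ge0; case/andP: (h j) => h1 h2; rewrite ler_norml h1 h2 //. Qed.

Lemma S_ge0 x : boxvec x -> 0 <= Sdef x.
Proof. by move=> h; apply: sumr_ge0 => j _; apply: term_ge0. Qed.

Lemma S0_bin x : boxvec x -> Sdef x = 0 -> binvec x.
Proof.
move=> h /eqP; rewrite psumr_eq0; last by move=> j _; apply: term_ge0.
move=> /allP H j; have := H j (mem_index_enum _); rewrite /= subr_eq0 => /eqP e.
case: (ler0P (x j 0)) => hx.
  by right; rewrite -[x j 0]opprK -(ler0_norm hx) -e.
by left; rewrite -(gtr0_norm hx) -e.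
Qed.

Lemma norm1_rnd x : norm1 (rnd x) = norm1 x + Sdef x.
Proof.
rewrite (norm1_bin (rnd_bin x)) /Sdef sumrB sumr_const card_ord /norm1.
by rewrite addrCA subrr addr0.
Qed.

Lemma absA l j : `|A l j| <= row_norminf A l.
Proof. exact: (le_bigmax 0 (fun j => `|A l j|) j). Qed.

Lemma row_rnd x l : boxvec x ->
  rowdot A l (rnd x) <= rowdot A l x + row_norminf A l * Sdef x.
Proof.
move=> h; rewrite -lerBlDl /rowdot !mxE -sumrB /Sdef mulr_sumr.
apply: ler_sum => j _; rewrite mxE -mulrBr.
apply: (le_trans (ler_norm _)); rewrite normrM.
have e : `|(if 0 <= x j 0 then 1 else -1) - x j 0| = 1 - `|x j 0|.
  case/andP: (h j) => h1 h2.
  case: ifP => hx.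
    by rewrite (ger0_norm hx) ger0_norm // subr_ge0.
  have hx' : x j 0 < 0 by rewrite ltNge hx.
  rewrite (ltr0_norm hx') ler0_norm ?opprB ?opprK //.
    by rewrite addrC.
  by rewrite subr_le0.
rewrite e; apply: ler_wpM2r; [exact: term_ge0 | exact: absA].
Qed.

Lemma maxobj_rnd lam x : (forall l, row_norminf A l < lam) -> boxvec x ->
  maxobj A (rnd x) - lam * norm1 (rnd x) <= maxobj A x - lam * norm1 x.
Proof.
move=> hl h; rewrite norm1_rnd mulrDr opprD addrA addrAC lerD2r lerBlDr.
rewrite /maxobj; apply: bigmax_le => [|l _].
  apply: (le_trans (row_rnd ord0 h)); rewrite lerD //.
    exact: (le_bigmax _ (fun l => rowdot A l x) ord0).
  by apply: ler_wpM2r; [exact: S_ge0 | exact: ltW].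
apply: (le_trans (row_rnd l h)); rewrite lerD //.
  exact: (le_bigmax _ (fun l => rowdot A l x) l).
by apply: ler_wpM2r; [exact: S_ge0 | exact: ltW].
Qed.

Lemma maxobj_rnd_lt lam x : (forall l, row_norminf A l < lam) -> boxvec x ->
  0 < Sdef x ->
  maxobj A (rnd x) - lam * norm1 (rnd x) < maxobj A x - lam * norm1 x.
Proof.
move=> hl h hS; rewrite norm1_rnd mulrDr opprD addrA addrAC ltrD2r ltrBlDr.
rewrite /maxobj; apply: bigmax_lt => [|l _].
  apply: (le_lt_trans (row_rnd ord0 h)); apply: ler_ltD.
    exact: (le_bigmax _ (fun l => rowdot A l x) ord0).
  by rewrite ltr_pM2r.
apply: (le_lt_trans (row_rnd l h)); apply: ler_ltD.
  exact: (le_bigmax _ (fun l => rowdot A l x) l).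
by rewrite ltr_pM2r.
Qed.
End Aux.

Theorem theorem3 (R : realFieldType) (m n : nat) (A : 'M[R]_(m.+1, n)) (lam : R)
  (hlam : forall l : 'I_m.+1, row_norminf A l < lam) :
  (forall x : 'cV[R]_n, optP A x -> optPlam A lam x) /\
  (forall x : 'cV[R]_n, optPlam A lam x -> optP A x).
Proof.
split.
  move=> x [hb ho]; split; first exact: bin_box.
  move=> y hy; apply: le_trans (maxobj_rnd hlam hy).
  rewrite (norm1_bin hb) (norm1_bin (rnd_bin y)) lerD2r.
  exact: ho (rnd_bin y).
move=> x [hb ho].
have xb : binvec x.
  apply: S0_bin => //; have := S_ge0 hb; rewrite le_eqVlt => /orP [/eqP <- //|hS].
  have := maxobj_rnd_lt hlam hb hS; have := ho _ (bin_box (rnd_bin x)).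
  by move=> h1 h2; have := lt_le_trans h2 h1; rewrite ltxx.
split => // y hy; have := ho y (bin_box hy).
by rewrite (norm1_bin xb) (norm1_bin hy) lerD2r.
Qed.
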